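(* Let $a,a^\dagger$ be the annihilation and creation operators of the harmonic oscillator, $[a,a^\dagger]=1$, with vacuum $|0\rangle$ ($a|0\rangle=0$, $\langle0|a^\dagger=0$, $\langle0|0\rangle=1$). For positive integers $n$ let $A_n^\dagger$ act on the formal span of $\{(a^\dagger)^m|0\rangle\}_{m\ge0}$ by $A_n^\dagger(a^\dagger)^m|0\rangle=\frac{m!}{(mn)!}(a^\dagger)^{mn}|0\rangle$, and let $A_n$ act from the right on the formal span of $\{\langle0|a^m\}_{m\ge0}$ by $\langle0|a^mA_n=\langle0|a^{mn}$. Then for $\mathrm{Re}(s)>1$, $$\zeta(s)=\langle0|\,a\Big(\prod_{q\text{ prime}}\frac{1}{1-A_q}\Big)(a^\dagger a)^{-s}\Big(\prod_{p\text{ prime}}\frac{1}{1-A_p^\dagger}\Big)a^\dagger\,|0\rangle,$$ where $\zeta(s)=\sum_{n\ge1}n^{-s}$ is the Riemann zeta function.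
   Context: The number states $|n\rangle=(a^\dagger)^n|0\rangle/\sqrt{n!}$ are orthonormal and $(a^\dagger a)^{-s}$ acts by $(a^\dagger a)^{-s}|n\rangle=n^{-s}|n\rangle$ for $n\ge1$. The products $\prod_p\frac{1}{1-A_p^\dagger}$, with $\frac{1}{1-A_p^\dagger}=\sum_{k\ge0}(A_p^\dagger)^k$, are expanded formally (the $A_p^\dagger$ commute), applied to $a^\dagger|0\rangle$ coefficientwise, similarly for the $A_q$ acting on $\langle0|a$, and the resulting pairing is evaluated termwise. *)

(* Defs.v *)
From Stdlib Require Import Reals.
From Coquelicot Require Import Coquelicot.
From mathcomp Require Import all_boot.
From mathcomp Require Import Rstruct.

Set Implicit Arguments.
Unset Strict Implicit.
Unset Printing Implicit Defensive.
Local Open Scope R_scope.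

(* A ket is given by its coefficients in the family (a^dagger)^m |0>,
   i.e. v represents  sum_m v m (a^dagger)^m |0>  (formally). *)
Definition ket := nat -> R.
(* A bra is given by its coefficients in the family <0| a^m. *)
Definition bra := nat -> R.

Definition ket_a1 : ket := fun m => if m == 1%N then R1 else R0.
Definition bra_a1 : bra := fun m => if m == 1%N then R1 else R0.

(* A_n^dagger (a^dagger)^m|0> = m!/(mn)! (a^dagger)^(mn)|0>, extended
   coefficientwise (for n >= 1 each target index j has at most one
   preimage m = j/n). *)
Definition Adag (n : nat) (v : ket) : ket := fun j =>
  if ((0 < n)%N) && (n %| j)%N then
    Rmult (Rdiv (INR (j %/ n)`!) (INR j`!)) (v (j %/ n))
  else R0.

Definition Aright (n : nat) (w : bra) : bra := fun j =>
  if ((0 < n)%N) && (n %| j)%N then w (j %/ n) else R0.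

(* A monomial  prod_{p} (A_p^dagger)^(k p)  with p ranging over 'I_N;
   k must be supported on primes. *)
Definition prime_supported N (k : {ffun 'I_N -> 'I_N}) : bool :=
  [forall p : 'I_N, ~~ prime p ==> (nat_of_ord (k p) == 0%N)].

Definition apply_ket N (k : {ffun 'I_N -> 'I_N}) (v : ket) : ket :=
  foldr (fun p acc => iter (k p) (Adag p) acc) v (enum 'I_N).

Definition apply_bra N (k : {ffun 'I_N -> 'I_N}) (w : bra) : bra :=
  foldl (fun acc p => iter (k p) (Aright p) acc) w (enum 'I_N).

(* Coefficient of (a^dagger)^m|0> in the formal expansion of
   (prod_p 1/(1 - A_p^dagger)) a^dagger|0>.  Only monomials with primes
   p <= m and exponents k_p <= m can contribute to degree m (every other
   monomial sends a^dagger|0> to degree > m), so the finite sum below over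
   all such prime-supported monomials is exactly the coefficientwise sum
   over all monomials of the expanded product. *)
Definition ket_expanded (m : nat) : R :=
  \big[Rplus/R0]_(k : {ffun 'I_m.+1 -> 'I_m.+1} | prime_supported k)
     apply_ket k ket_a1 m.

(* Coefficient of <0|a^m in <0| a (prod_q 1/(1 - A_q)). *)
Definition bra_expanded (m : nat) : R :=
  \big[Rplus/R0]_(k : {ffun 'I_m.+1 -> 'I_m.+1} | prime_supported k)
     apply_bra k bra_a1 m.

(* n^(-s) for n >= 1 (principal value, exp(-s ln n)); the value at n = 0
   is irrelevant (set to 0), since (a^dagger a)^(-s) is only defined on
   |n>, n >= 1, and all coefficients involved vanish at degree 0. *)
Definition npow_neg (n : nat) (s : C) : C :=
  if n == 0%N then RtoC R0
  else (exp (- Re s * ln (INR n)) * cos (Im s * ln (INR n)),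
        - (exp (- Re s * ln (INR n)) * sin (Im s * ln (INR n)))).

(* Number states: (a^dagger)^m|0> = sqrt(m!) |m>,  <0|a^m = sqrt(m!) <m|,
   <m|n> = delta_mn, (a^dagger a)^(-s)|n> = n^(-s)|n>.  Hence the n-th
   term of the termwise-evaluated pairing
   <0| a (prod_q ...) (a^dagger a)^(-s) (prod_p ...) a^dagger |0>. *)
Definition pairing_term (s : C) (n : nat) : C :=
  Cmult (RtoC ((bra_expanded n * sqrt (INR n`!)) *
               (ket_expanded n * sqrt (INR n`!))))
        (npow_neg n s).

(* Main.v *)
Require Import Defs.
From Stdlib Require Import Reals.
From Coquelicot Require Import Coquelicot.
From Stdlib Require Import Lra FunctionalExtensionality.

Lemma ln_le_sub1 z : 0 < z -> ln z <= z - 1.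
Proof. intro hz. pose proof (exp_ineq1_le (ln z)). rewrite exp_ln in H; lra. Qed.

Lemma key_ineq (t x : R) : 0 < t -> 2 <= x ->
  exp (- (t + 1) * ln x) <= (exp (- t * ln (x - 1)) - exp (- t * ln x)) / t.
Proof.
intros ht hx.
set (EE := exp (- t * ln x)).
assert (hE : 0 < EE) by apply exp_pos.
assert (h1 : exp (- (t + 1) * ln x) = EE / x).
{ unfold EE. replace (- (t + 1) * ln x) with (- t * ln x + - ln x) by ring.
  rewrite exp_plus, exp_Ropp, exp_ln by lra. field. lra. }
assert (h2 : exp (- t * ln (x - 1)) = EE * exp (t * (ln x - ln (x - 1)))).
{ unfold EE. rewrite <- exp_plus. f_equal. ring. }
assert (h3 : 1 / x <= ln x - ln (x - 1)).
{ pose proof (ln_le_sub1 ((x - 1) / x)) as H.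
  rewrite ln_div in H by lra.
  replace ((x-1)/x - 1) with (- (1/x)) in H by (field; lra).
  assert (0 < (x - 1) / x) by (apply Rdiv_lt_0_compat; lra). lra. }
assert (h4 : 1 + t * (ln x - ln (x - 1)) <= exp (t * (ln x - ln (x - 1)))) by apply exp_ineq1_le.
rewrite h1, h2.
apply Rmult_le_reg_r with t; [lra|].
replace ((EE * exp (t * (ln x - ln (x - 1))) - EE) / t * t) with (EE * exp (t * (ln x - ln (x - 1))) - EE) by (field; lra).
replace (EE / x * t) with (EE * (t * (1/x))) by (field; lra).
assert (EE * (t * (1/x)) <= EE * (t * (ln x - ln (x - 1)))).
{ apply Rmult_le_compat_l; [lra|]. apply Rmult_le_compat_l; lra. }
assert (EE * (1 + t * (ln x - ln (x - 1))) <= EE * exp (t * (ln x - ln (x - 1)))).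
{ apply Rmult_le_compat_l; lra. }
lra.
Qed.

Definition gg (t : R) (m : nat) := exp (- t * ln (INR m)).

Definition dd (t : R) (n : nat) : R :=
  match n with O => 0 | S O => 1 | S m => (gg t m - gg t n) / t end.

Lemma sum_dd t N : 0 < t -> sum_n (dd t) (S N) = 1 + (1 - gg t (S N)) / t.
Proof.
intro ht. induction N.
- rewrite sum_Sn, sum_O. unfold gg. simpl. rewrite ln_1, Rmult_0_r, exp_0.
  unfold plus; simpl. field; lra.
- rewrite sum_Sn, IHN. unfold plus; simpl. unfold dd. field. lra.
Qed.

Definition cc (sig : R) (n : nat) : R := match n with O => 0 | _ => exp (- sig * ln (INR n)) end.

Lemma cc_le_dd t n : 0 < t -> cc (t + 1) n <= dd t n.
Proof.
intro ht. destruct n as [|[|m]].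
- simpl; lra.
- simpl. rewrite ln_1, Rmult_0_r, exp_0; lra.
- unfold cc, dd, gg. 
  replace (INR (S m)) with (INR (S (S m)) - 1) by (rewrite !S_INR; ring).
  apply key_ineq; auto. rewrite !S_INR. pose proof (pos_INR m). lra.
Qed.

Lemma ex_series_cc sig : 1 < sig -> ex_series (cc sig).
Proof.
intro hs. set (t := sig - 1).
assert (ht : 0 < t) by (unfold t; lra).
replace sig with (t + 1) by (unfold t; ring).
apply (@ex_series_le R_AbsRing R_CompleteNormedModule _ (dd t)).
- intro n. unfold norm; simpl. unfold abs; simpl.
  rewrite Rabs_pos_eq. apply cc_le_dd; auto.
  destruct n; simpl; [lra|]. left; apply exp_pos.
- assert (hpos : forall n, 0 <= dd t n).
  { intro n. eapply Rle_trans; [|apply (cc_le_dd t n ht)].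
    destruct n; simpl; [lra|]. left; apply exp_pos. }
  destruct (ex_finite_lim_seq_incr (sum_n (dd t)) (1 + 1 / t)) as [l Hl].
  + intro n. rewrite sum_Sn. pose proof (hpos (S n)).
    change (plus (sum_n (dd t) n) (dd t (S n))) with (sum_n (dd t) n + dd t (S n)). lra.
  + intro n. destruct n.
    * rewrite sum_O. simpl. assert (0 < 1 / t) by (apply Rdiv_lt_0_compat; lra). lra.
    * rewrite sum_dd by auto. assert (0 < gg t (S n)) by apply exp_pos.
      unfold Rdiv. assert (0 < / t) by (apply Rinv_0_lt_compat; lra). nra.
  + exists l. exact Hl.
Qed.

From mathcomp Require Import all_boot.
Set Implicit Arguments.
Unset Strict Implicit.
Local Open Scope R_scope.

Lemma fact_neq0 n : INR (n`!) <> 0.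
Proof. apply: not_0_INR; apply/eqP; rewrite -lt0n; exact: fact_gt0. Qed.

Lemma Adag1 v : Adag 1 v = v.
Proof.
apply: functional_extensionality => j; rewrite /Adag /= dvd1n divn1.
field; exact: fact_neq0.
Qed.

Lemma AdagM n m v : (0 < n)%N -> (0 < m)%N -> Adag n (Adag m v) = Adag (n * m) v.
Proof.
move=> n0 m0; apply: functional_extensionality => j; rewrite /Adag n0 m0 muln_gt0 n0 m0 /=.
case nj: (n %| j)%N; last first.
  case: ifP => // /(dvdn_trans (dvdn_mulr _ (dvdnn n))); by rewrite nj.
have -> : (n * m %| j)%N = (m %| j %/ n)%N.
  by rewrite -{1}(divnK nj) mulnC dvdn_pmul2r.
case: ifP => _; last by rewrite Rmult_0_r.
rewrite divnMA; field; split; exact: fact_neq0.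
Qed.

Lemma iter_Adag e p v : (e = 0%N \/ 0 < p)%N -> iter e (Adag p) v = Adag (p ^ e) v.
Proof.
case=> [->|p0]; first by rewrite /= expn0 Adag1.
elim: e => [|e IH]; first by rewrite /= expn0 Adag1.
by rewrite iterS IH AdagM ?expn_gt0 ?p0 // expnS.
Qed.

Lemma Aright1 v : Aright 1 v = v.
Proof. by apply: functional_extensionality => j; rewrite /Aright /= dvd1n divn1. Qed.

Lemma ArightM n m v : (0 < n)%N -> (0 < m)%N -> Aright n (Aright m v) = Aright (n * m) v.
Proof.
move=> n0 m0; apply: functional_extensionality => j; rewrite /Aright n0 m0 muln_gt0 n0 m0 /=.
case nj: (n %| j)%N; last first.
  case: ifP => // /(dvdn_trans (dvdn_mulr _ (dvdnn n))); by rewrite nj.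
have -> : (n * m %| j)%N = (m %| j %/ n)%N.
  by rewrite -{1}(divnK nj) mulnC dvdn_pmul2r.
by rewrite divnMA.
Qed.

Lemma iter_Aright e p v : (e = 0%N \/ 0 < p)%N -> iter e (Aright p) v = Aright (p ^ e) v.
Proof.
case=> [->|p0]; first by rewrite /= expn0 Aright1.
elim: e => [|e IH]; first by rewrite /= expn0 Aright1.
by rewrite iterS IH ArightM ?expn_gt0 ?p0 // expnS.
Qed.

Definition Dk N (k : {ffun 'I_N -> 'I_N}) : nat := (\prod_(p <- enum 'I_N) p ^ (k p))%N.

Lemma ok_pow N (k : {ffun 'I_N -> 'I_N}) (p : 'I_N) :
  (forall p, nat_of_ord (k p) = 0%N \/ (0 < p)%N) -> (0 < p ^ (k p))%N.
Proof. move=> H; case: (H p) => [->|p0]; by rewrite ?expn0 ?expn_gt0 ?p0. Qed.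

Lemma apply_ket_eq N (k : {ffun 'I_N -> 'I_N}) v :
  (forall p, nat_of_ord (k p) = 0%N \/ (0 < p)%N) -> apply_ket k v = Adag (Dk k) v.
Proof.
move=> H; rewrite /apply_ket /Dk; elim: (enum 'I_N) => [|p s IH].
  by rewrite big_nil Adag1.
rewrite big_cons /= IH iter_Adag // AdagM ?ok_pow //.
elim: s {IH} => [|q s IHs]; first by rewrite big_nil.
by rewrite big_cons muln_gt0 IHs ok_pow.
Qed.

Lemma apply_bra_eq N (k : {ffun 'I_N -> 'I_N}) w :
  (forall p, nat_of_ord (k p) = 0%N \/ (0 < p)%N) -> apply_bra k w = Aright (Dk k) w.
Proof.
move=> H; rewrite /apply_bra /Dk; elim: (enum 'I_N) w => [|p s IH] w.
  by rewrite big_nil Aright1.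
rewrite big_cons /= IH iter_Aright // ArightM ?ok_pow //; last first.
  elim: s {IH} => [|q s IHs]; first by rewrite big_nil.
  by rewrite big_cons muln_gt0 IHs ok_pow.
by rewrite mulnC.
Qed.

Lemma ps_ok N (k : {ffun 'I_N -> 'I_N}) : prime_supported k ->
  (forall p, nat_of_ord (k p) = 0%N \/ (0 < p)%N).
Proof.
move=> /forallP H p; move: (H p); case: (boolP (prime p)) => [pp _|_ /= /eqP]; by [right; exact: prime_gt0 | left].
Qed.
Local Open Scope R_scope.
From HB Require Import structures.
HB.instance Definition _ := Monoid.isComLaw.Build R R0 Rplus (fun a b c => esym (Rplus_assoc a b c)) Rplus_comm Rplus_0_l.

Lemma Adag_a1 d m : (0 < m)%N -> (0 < d)%N ->
  Adag d ket_a1 m = if d == m then / INR (m`!) else 0.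
Proof.
move=> m0 d0; rewrite /Adag /ket_a1 d0 /=.
case: (eqVneq d m) => [<-|dm].
  rewrite dvdnn divnn d0 /=; rewrite /Rdiv; simpl INR; lra.
case: ifP => // dvd; case: ifP => [/eqP h|_]; last by rewrite Rmult_0_r.
by move: dm; rewrite -(divnK dvd) h mul1n eqxx.
Qed.

Lemma Aright_a1 d m : (0 < m)%N -> (0 < d)%N ->
  Aright d bra_a1 m = if d == m then 1 else 0.
Proof.
move=> m0 d0; rewrite /Aright /bra_a1 d0 /=.
case: (eqVneq d m) => [<-|dm].
  by rewrite dvdnn divnn d0.
case: ifP => // dvd; case: ifP => [/eqP h|_] //.
by move: dm; rewrite -(divnK dvd) h mul1n eqxx.
Qed.

Lemma logn_prodl (I : Type) q (s : seq I) (F : I -> nat) : (forall p, 0 < F p)%N ->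
  logn q (\prod_(p <- s) F p) = (\sum_(p <- s) logn q (F p))%N.
Proof.
move=> H; elim: s => [|p s IH]; first by rewrite !big_nil logn1.
rewrite !big_cons lognM ?IH // ; elim: s {IH} => [|r s IHs]; first by rewrite big_nil.
by rewrite big_cons muln_gt0 H IHs.
Qed.

Section Count.
Variable m : nat.
Hypothesis m0 : (0 < m)%N.

Definition k0 : {ffun 'I_m.+1 -> 'I_m.+1} := [ffun p : 'I_m.+1 => inord (logn p m)].

Lemma k0E p : nat_of_ord (k0 p) = logn p m.
Proof. rewrite ffunE inordK //; rewrite ltnS; exact: ltnW (ltn_logl _ m0). Qed.

Lemma k0_ps : prime_supported k0.
Proof.
apply/forallP => p; apply/implyP => np; rewrite k0E lognE.
by rewrite (negbTE np).
Qed.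

Lemma Dk0 : Dk k0 = m.
Proof.
rewrite /Dk big_enum /=.
rewrite -[RHS](partnT m0) /partn big_mkord.
apply: eq_big => // p; by rewrite k0E.
Qed.

Lemma Dk_uniq (k : {ffun 'I_m.+1 -> 'I_m.+1}) : prime_supported k -> Dk k = m -> k = k0.
Proof.
move=> ps Dm; apply/ffunP => q; apply: val_inj; rewrite /= k0E (_ : logn q m = logn q (Dk k)); last by rewrite Dm.
case: (boolP (prime q)) => pq; last first.
  rewrite lognE (negbTE pq) /=.
  by move/forallP: ps => /(_ q) /implyP /(_ pq) /eqP.
rewrite /Dk (@logn_prodl _ _ _ (fun p : 'I_m.+1 => p ^ k p)%N); last first.
  move=> p; exact: (ok_pow p (ps_ok ps)).
rewrite big_enum /= (bigD1 q) //= lognX logn_prime // eqxx muln1 big1 ?addn0 //.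
move=> p pq'; rewrite lognX.
case: (boolP (prime p)) => pp.
  rewrite logn_prime //; case: eqP => [h|]; last by rewrite muln0.
  by move: pq'; rewrite (_ : q = p) ?eqxx //; apply: val_inj.
by move/forallP: ps => /(_ p) /implyP /(_ pp) /eqP ->.
Qed.

Lemma count_sum (F : {ffun 'I_m.+1 -> 'I_m.+1} -> R) c :
  (forall k, prime_supported k -> F k = if Dk k == m then c else 0) ->
  \big[Rplus/R0]_(k : {ffun 'I_m.+1 -> 'I_m.+1} | prime_supported k) F k = c.
Proof.
move=> HF.
rewrite (bigD1 k0) ?k0_ps //= HF ?k0_ps // Dk0 eqxx big1 ?Rplus_0_r //.
move=> k /andP [ps nk]; rewrite HF //; case: eqP => // h.
by move: nk; rewrite (Dk_uniq ps h) eqxx.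
Qed.

End Count.

Lemma ket_exp m : (0 < m)%N -> ket_expanded m = / INR (m`!).
Proof.
move=> m0; rewrite /ket_expanded; apply: count_sum => // k ps.
rewrite apply_ket_eq; last exact: ps_ok.
rewrite (Adag_a1 m0) //.
rewrite /Dk; elim: (enum _) => [|p s IH]; first by rewrite big_nil.
by rewrite big_cons muln_gt0 IH (ok_pow p (ps_ok ps)).
Qed.

Lemma bra_exp m : (0 < m)%N -> bra_expanded m = 1.
Proof.
move=> m0; rewrite /bra_expanded; apply: count_sum => // k ps.
rewrite apply_bra_eq; last exact: ps_ok.
rewrite (Aright_a1 m0) //.
rewrite /Dk; elim: (enum _) => [|p s IH]; first by rewrite big_nil.
by rewrite big_cons muln_gt0 IH (ok_pow p (ps_ok ps)).
Qed.

Lemma pairing_eq s n : pairing_term s n = npow_neg n s.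
Proof.
rewrite /pairing_term; case: n => [|n].
  by rewrite /npow_neg /= Cmult_0_r.
rewrite ket_exp // bra_exp //.
have h := @fact_neq0 n.+1.
have p : 0 < INR (n.+1)`! by apply: lt_0_INR; apply/ltP; exact: fact_gt0.
have -> : (1 * sqrt (INR (n.+1)`!) * (/ INR (n.+1)`! * sqrt (INR (n.+1)`!))) = 1.
  rewrite Rmult_1_l Rmult_comm Rmult_assoc sqrt_sqrt; [field|]; lra.
by rewrite Cmult_1_l.
Qed.

Lemma norm_npow n s : Cmod (npow_neg n s) = cc (Re s) n.
Proof.
case: n => [|n].
  by rewrite /npow_neg /= Cmod_0.
rewrite /npow_neg /= /Cmod /=.
set E := exp _; set a := Rmult (Im s) _.
have hE : 0 < E by apply: exp_pos.
have h := sin2_cos2 a; rewrite /Rsqr in h.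
have -> : Rplus (pow (E * cos a) 2) (pow (- (E * sin a)) 2) = pow E 2.
  transitivity (E * E * (sin a * sin a + cos a * cos a)); [simpl; ring | rewrite h; simpl; ring].

by rewrite sqrt_pow2 //; lra.
Qed.

Theorem mainTheorem6 (s : C) :
  (1 < Re s)%R ->
  exists zeta_s : C,
    is_series (fun n => npow_neg n s) zeta_s /\
    is_series (fun n => pairing_term s n) zeta_s.
Proof.
move=> hs.
have ex : ex_series (fun n => npow_neg n s).
  apply: (@ex_series_le C_AbsRing C_CompleteNormedModule _ (cc (Re s))).
    by move=> n; rewrite /norm /= norm_npow; apply: Rle_refl.
  exact: ex_series_cc.
case: ex => l hl; exists l; split => //.
by apply: (is_series_ext (fun n => npow_neg n s)) => // n; rewrite pairing_eq.
Qed.
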